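(* Let $\mathbb T=\mathbb{R}/\mathbb{Z}$, let $\sigma_1,\sigma_2:\mathbb T\to\mathbb T$ be measurable maps with $\lambda_{\mathbb T}(\sigma_i^{-1}(\mathbb{Q}/\mathbb{Z}))=0$ for $i=1,2$, and let $\Gamma$ be the group generated by $h(x,y)=(x+\sigma_2(y),y)$ and $v(x,y)=(x,y+\sigma_1(x))$ acting on $\mathbb T^2$. Then the action of $\Gamma$ on $\mathbb T^2$ is ergodic with respect to the Lebesgue measure $\lambda_{\mathbb T^2}$.
   Context: $\lambda_{\mathbb T^d}$ denotes the normalized Lebesgue measure on $\mathbb T^d$; $h,v$ are invertible and preserve $\lambda_{\mathbb T^2}$. *)

(* Defs.v *)
(* The torus T = R/Z is modelled by the fundamental
   domain [0,1) with addition mod 1; T^2 by [0,1) x [0,1) inside R * R. *)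
From HB Require Import structures.
From mathcomp Require Import all_boot all_order all_algebra.
From mathcomp Require Import all_classical all_reals all_analysis.
Set Implicit Arguments. Unset Strict Implicit. Unset Printing Implicit Defensive.
Import Order.TTheory GRing.Theory Num.Theory.
Local Open Scope classical_set_scope.
Local Open Scope ring_scope.

Section Torus.
Variable R : realType.

Definition frac (x : R) : R := x - (Num.floor x)%:~R.

Definition T1 : set R := `[0, 1[%classic.
Definition T2 : set (R * R) := T1 `*` T1.

(* x mod 1 lies in Q/Z  iff  x is rational *)
Definition is_rational (x : R) : Prop := exists q : rat, x = ratr q.

Definition hmap (s2 : R -> R) (p : R * R) : R * R := (frac (p.1 + s2 p.2), p.2).
Definition hinv (s2 : R -> R) (p : R * R) : R * R := (frac (p.1 - s2 p.2), p.2).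
Definition vmap (s1 : R -> R) (p : R * R) : R * R := (p.1, frac (p.2 + s1 p.1)).
Definition vinv (s1 : R -> R) (p : R * R) : R * R := (p.1, frac (p.2 - s1 p.1)).

Inductive in_Gamma (s1 s2 : R -> R) : (R * R -> R * R) -> Prop :=
| Gamma_id : in_Gamma s1 s2 id
| Gamma_h g : in_Gamma s1 s2 g -> in_Gamma s1 s2 (hmap s2 \o g)
| Gamma_hinv g : in_Gamma s1 s2 g -> in_Gamma s1 s2 (hinv s2 \o g)
| Gamma_v g : in_Gamma s1 s2 g -> in_Gamma s1 s2 (vmap s1 \o g)
| Gamma_vinv g : in_Gamma s1 s2 g -> in_Gamma s1 s2 (vinv s1 \o g).

(* normalized Lebesgue measure on T^2 (T2 has product measure 1) *)
Definition lambda2 := ((@lebesgue_measure R) \x (@lebesgue_measure R))%E.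

Definition Gamma_ergodic (s1 s2 : R -> R) : Prop :=
  forall A : set (R * R), measurable A -> A `<=` T2 ->
    (forall g, in_Gamma s1 s2 g -> T2 `&` (g @^-1` A) = A) ->
    lambda2 A = 0%E \/ lambda2 A = 1%E.
End Torus.

(* Main.v *)
Require Import Defs.
From HB Require Import structures.
From mathcomp Require Import all_boot all_order all_algebra.
From mathcomp Require Import all_classical all_reals all_analysis.
From mathcomp Require Import ring lra.
From mathcomp Require Import measurable_realfun.
Import Order.TTheory GRing.Theory Num.Theory.
Import numFieldNormedType.Exports.
Local Open Scope classical_set_scope.
Local Open Scope ring_scope.
Set Implicit Arguments. Unset Strict Implicit. Unset Printing Implicit Defensive.
Local Notation frac := Defs.frac.
Section Frac.
Variable R : realType.
Implicit Types x y : R.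

Lemma frac_ge0 x : 0 <= frac x.
Proof. by rewrite /frac subr_ge0 floor_le. Qed.

Lemma frac_lt1 x : frac x < 1.
Proof. have := floorD1_gt x; rewrite /frac intrD; lra. Qed.

Lemma frac_T1 x : T1 (frac x).
Proof. by rewrite /T1 /= in_itv /= frac_ge0 frac_lt1. Qed.

Lemma frac_id x : 0 <= x < 1 -> frac x = x.
Proof.
move=> hx; rewrite /frac (_ : Num.floor x = 0) ?subr0 //.
by apply/eqP; rewrite floor_eq add0r /= hx.
Qed.

Lemma fracDz x (z : int) : frac (x + z%:~R) = frac x.
Proof.
rewrite /frac floorDrz ?intr_int // intrKfloor intrD; lra.
Qed.

Lemma frac_frac x y : frac (frac x + y) = frac (x + y).
Proof.
rewrite /frac.
have -> : x - (Num.floor x)%:~R + y = (x + y) + (- Num.floor x)%:~R by rewrite intrN; lra.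
by rewrite -/(frac _) fracDz.
Qed.

End Frac.
Section Dens.
Variable R : realType.

Lemma trunc_close (x y : R) : 0 <= x -> 0 <= y -> Num.truncn x = Num.truncn y -> `|x - y| < 1.
Proof.
move=> x0 y0 e; have := truncn_itv x0; have := truncn_itv y0; rewrite -e.
move=> /andP[h1 h2] /andP[h3 h4]; rewrite -natr1 in h2 h4.
rewrite ltr_norml; apply/andP; split; lra.
Qed.

Lemma dirichlet (a : R) : ~ is_rational a -> forall e : R, 0 < e ->
  exists m k : int, 0 < m%:~R * a + k%:~R < e.
Proof.
move=> ha e e0.
set n := Num.truncn (e^-1).
pose N : R := n.+1%:R.
have N0 : 0 < N by rewrite ltr0n.
have Ne : N^-1 < e.
  have := truncnS_gt (e^-1); rewrite -/n -/N => h.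
  by rewrite -(invrK e) ltf_pV2 // ?posrE ?invr_gt0.
pose fr (i : nat) := frac (i%:R * a).
pose f (i : 'I_n.+2) : 'I_n.+1 := inord (Num.truncn (N * fr i)).
have fle i : (Num.truncn (N * fr i) < n.+1)%N.
  rewrite truncn_lt_nat ?mulr_ge0 ?frac_ge0 ?ltW //.
  by rewrite -/N -{2}(mulr1 N) ltr_pM2l // frac_lt1.
have [i [j [fij ij]]] : exists i j, f i = f j /\ i != j.
  apply: contrapT => hne.
  have finj : injective f.
    move=> i j fij; apply/eqP; apply: contrapT => /negP ij; apply: hne.
    by exists i, j.
  by have := leq_card f finj; rewrite !card_ord ltnn.
have tij : Num.truncn (N * fr i) = Num.truncn (N * fr j).
  by move: fij => /(congr1 val); rewrite /f /= !inordK.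
have cl := trunc_close (mulr_ge0 (ltW N0) (frac_ge0 _)) (mulr_ge0 (ltW N0) (frac_ge0 _)) tij.
have cl' : `|fr i - fr j| < e.
  apply: le_lt_trans Ne; rewrite -mulrBr normrM gtr0_norm // in cl.
  rewrite -(ler_pM2l N0) mulfV ?gt_eqF //; exact: ltW.
pose m : int := (i%:Z - j%:Z).
pose k : int := (- Num.floor (i%:R * a) + Num.floor (j%:R * a)).
have dE : fr i - fr j = m%:~R * a + k%:~R.
  rewrite /fr /Defs.frac /m /k !intrD !intrN /= -!pmulrn; lra.
have dn0 : m%:~R * a + k%:~R != 0.
  apply/negP => /eqP h; apply: ha.
  have m0 : m != 0 by rewrite /m subr_eq0; apply: contra ij => /eqP [] /val_inj ->.
  exists ((- k)%:Q / m%:Q).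
  rewrite fmorph_div /= !ratr_int.
  have -> : a = (m%:~R * a) / m%:~R by rewrite mulrC mulKf // intr_eq0.
  by congr (_ / _); rewrite intrN; lra.
rewrite -dE in dn0.
have [dpos|dneg] := ltP 0 (fr i - fr j).
  exists m, k; rewrite -dE dpos /=; exact: le_lt_trans (ler_norm _) cl'.
exists (- m), (- k).
have dlt : fr i - fr j < 0 by rewrite lt_neqAle dn0 dneg.
rewrite !intrN mulNr -opprD -dE oppr_gt0 dlt /=.
by rewrite ltr0_norm // in cl'.
Qed.

End Dens.
Section Shift.
Variable R : realType.
Local Notation mu := (@lebesgue_measure R).

Definition shf (c : R) : measurableTypeR R -> measurableTypeR R := fun x => @GRing.add R x c.
Lemma shift_mfun (c : R) : measurable_fun setT (shf c).
Proof. by apply: measurable_realfun.measurable_funD => //; exact: measurable_cst. Qed.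

Definition shiftm (c : R) : set (measurableTypeR R) -> \bar R := pushforward mu (shf c).
Let shiftm0 c : shiftm c set0 = 0%E.
Proof. by rewrite /shiftm /pushforward preimage_set0 measure0. Qed.
Let shiftm_ge0 c A : (0 <= shiftm c A)%E.
Proof. by rewrite /shiftm /pushforward; exact: measure_ge0. Qed.
Let shiftm_sigma_additive c : semi_sigma_additive (shiftm c).
Proof.
move=> F mF tF mUF; rewrite /shiftm /pushforward preimage_bigcup.
apply: measure_semi_sigma_additive.
- by move=> n; rewrite -[X in measurable X]setTI; exact: shift_mfun.
- apply/trivIsetP => /= i j _ _ ij; rewrite -preimage_setI.
  by move/trivIsetP : tF => /(_ _ _ _ _ ij) ->//; rewrite preimage_set0.
- by rewrite -preimage_bigcup -[X in measurable X]setTI; exact: shift_mfun.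
Qed.
HB.instance Definition _ c := isMeasure.Build _ _ _
  (shiftm c) (shiftm0 c) (shiftm_ge0 c) (@shiftm_sigma_additive c).

Lemma lebesgue_shift (c : R) (A : set R) : measurable A ->
  mu ((fun x => x + c) @^-1` A) = mu A.
Proof.
move=> mA.
transitivity (shiftm c A); first by [].
symmetry; apply: (@lebesgue_measure_unique R (shiftm c)) => // _ [[a b]] _ <-.
change (mu `]a, b] = mu (shf c @^-1` `]a, b])).
have -> : shf c @^-1` `]a, b] = `]a - c, b - c]%classic.
  apply/seteqP; split => x /=; rewrite !in_itv /= /shf => /andP[h1 h2];
    apply/andP; split; lra.
rewrite !lebesgue_measure_itv /= !lte_fin ltrD2r.
by case: ifPn => // _; rewrite -EFinB; congr (_%:E); lra.
Qed.

Lemma mu_le (A B : set R) : measurable A -> measurable B -> A `<=` B -> (mu A <= mu B)%E.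
Proof. by move=> mA mB AB; apply: le_measure => //; rewrite inE. Qed.

Lemma mu_U2 (A B : set R) : measurable A -> measurable B -> (mu (A `|` B) <= mu A + mu B)%E.
Proof. by move=> mA mB; apply: measureU2. Qed.

Lemma mu_U (A B : set R) : measurable A -> measurable B -> A `&` B = set0 ->
  mu (A `|` B) = (mu A + mu B)%E.
Proof. by move=> mA mB AB; apply: measureU. Qed.

Lemma mu_oc (t s : R) : 0 <= s -> mu `]t, (t + s)] = s%:E.
Proof.
move=> s0; rewrite lebesgue_measure_itv /= lte_fin.
case: ifPn => h; first by rewrite -EFinB; congr (_%:E); lra.
by congr (_%:E); move: h; rewrite -leNgt; lra.
Qed.

End Shift.
Section Lin.
Variable R : realType.

Lemma small_zero (y c : R) : (forall n : nat, `|y| * n.+1%:R <= c) -> y = 0.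
Proof.
move=> h; apply/eqP; apply: contraT => y0.
have ay : 0 < `|y| by rewrite normr_gt0.
have := truncnS_gt (c / `|y|).
rewrite ltr_pdivrMr // mulrC => h2.
by have := h (Num.truncn (c / `|y|)); rewrite leNgt h2.
Qed.

Lemma additive_linear (f : R -> R) :
  (forall a b, 0 <= a -> 0 <= b -> f (a + b) = f a + f b) ->
  (forall a, 0 <= a -> 0 <= f a) ->
  forall s, 0 <= s -> f s = f 1 * s.
Proof.
move=> fD f0.
have f00 : f 0 = 0 by have := fD 0 0 (lexx _) (lexx _); rewrite addr0; lra.
have fmono a b : 0 <= a -> a <= b -> f a <= f b.
  move=> a0 ab; have -> : b = a + (b - a) by lra.
  rewrite fD ?subr_ge0 //; have := f0 (b - a); rewrite subr_ge0 => /(_ ab); lra.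
have fn s (n : nat) : 0 <= s -> f (n%:R * s) = n%:R * f s.
  move=> s0; elim: n => [|n IH]; first by rewrite !mul0r f00.
  by rewrite -natr1 !mulrDl !mul1r fD ?IH // mulr_ge0.
have finv (n : nat) : f (n.+1%:R^-1) = f 1 / n.+1%:R.
  have := fn (n.+1%:R^-1) n.+1; rewrite invr_ge0 ler0n => /(_ isT).
  rewrite mulfV ?pnatr_eq0 // => ->.
  by rewrite mulrC mulKf ?pnatr_eq0.
move=> s s0; apply/eqP; rewrite -subr_eq0; apply/eqP.
apply: (@small_zero _ (f 1)) => n.
set N : R := n.+1%:R.
have N0 : 0 < N by rewrite ltr0n.
set k := Num.truncn (N * s).
have := truncn_itv (mulr_ge0 (ltW N0) s0); rewrite -/k => /andP[hk1 hk2].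
have e1 : k%:R / N <= s by rewrite ler_pdivrMr // mulrC.
have e2 : s <= k.+1%:R / N by rewrite ler_pdivlMr // mulrC ltW.
have f1 : f (k%:R / N) = k%:R * (f 1 / N) by rewrite fn ?invr_ge0 ?ltW // finv.
have f2 : f (k.+1%:R / N) = k.+1%:R * (f 1 / N) by rewrite fn ?invr_ge0 ?ltW // finv.
have l1 := fmono _ _ (divr_ge0 (ler0n _ _) (ltW N0)) e1.
have l2 := fmono _ _ s0 e2.
rewrite f1 in l1; rewrite f2 in l2.
have c0 : 0 <= f 1 := f0 1 ler01.
have m1 : k%:R * (f 1 / N) <= f 1 * s.
  by rewrite mulrCA; apply: ler_wpM2l.
have m2 : f 1 * s <= k.+1%:R * (f 1 / N).
  by rewrite mulrCA; apply: ler_wpM2l.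
have eq3 : k.+1%:R * (f 1 / N) = k%:R * (f 1 / N) + f 1 / N by rewrite -natr1 mulrDl mul1r.
rewrite eq3 in l2 m2.
rewrite -ler_pdivlMr //.
move: l1 l2 m1 m2; set u := k%:R * (f 1 / N); set v := f 1 / N; set w := f 1 * s; set z := f s => l1 l2 m1 m2.
rewrite ler_norml; apply/andP; split; lra.
Qed.
End Lin.
Section OneD.
Variable R : realType.
Local Notation mu := (@lebesgue_measure R).
Variables (E : set R) (mE : measurable E) (ET : E `<=` @T1 R) (a : R).
Hypothesis ha : ~ is_rational a.
Hypothesis inv : forall x, @T1 R x -> (E x <-> E (frac (x + a))).

Let Et := [set x : R | E (frac x)].

Let mshf c (A : set R) : measurable A -> measurable (shf c @^-1` A).
Proof. by move=> mA; rewrite -[X in measurable X]setTI; exact: shift_mfun. Qed.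

Lemma Et_ex x : Et x <-> exists z : int, E (x - z%:~R).
Proof.
split; first by move=> h; exists (Num.floor x).
move=> [z Ez]; rewrite /Et /=.
have := ET Ez; rewrite /T1 /= in_itv /= => h.
have -> : x = (x - z%:~R) + z%:~R by rewrite subrK.
by rewrite fracDz frac_id.
Qed.

Lemma mEt : measurable Et.
Proof.
have -> : Et = \bigcup_(n : nat) (shf (- n%:R) @^-1` E `|` shf (n%:R) @^-1` E).
  apply/seteqP; split => x.
    move/Et_ex => [[n|n] h].
      by exists n => //; left; rewrite /shf /=; rewrite -pmulrn in h.
    exists n.+1 => //; right; rewrite /shf /=.
    by move: h; rewrite NegzE intrN opprK -pmulrn.
  move=> [n _ [h|h]]; apply/Et_ex.
    by exists n; rewrite -pmulrn.
  by exists (- n%:Z); rewrite intrN opprK -pmulrn.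
by apply: bigcupT_measurable => n; apply: measurableU; apply: mshf.
Qed.

Definition Pinv (d : R) := forall x, Et x <-> Et (x + d).

Lemma P1 : Pinv 1.
Proof.
move=> x; rewrite /Et /=; have -> : (1 : R) = (1 : int)%:~R by [].
by rewrite fracDz.
Qed.

Lemma Pa : Pinv a.
Proof.
move=> x; rewrite /Et /= -frac_frac; apply: inv; exact: frac_T1.
Qed.

Lemma PD d d' : Pinv d -> Pinv d' -> Pinv (d + d').
Proof. by move=> h h' x; rewrite addrA -h'. Qed.

Lemma PN d : Pinv d -> Pinv (- d).
Proof. by move=> h x; rewrite (h (x + - d)) addrNK. Qed.

Lemma Pz d (z : int) : Pinv d -> Pinv (z%:~R * d).
Proof.
move=> h.
have hn (n : nat) : Pinv (n%:R * d).
  elim: n => [|n IH]; first by rewrite mul0r => x; rewrite addr0.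
  by rewrite -natr1 mulrDl mul1r; apply: PD.
case: z => n; first by rewrite -pmulrn.
by rewrite NegzE intrN mulNr; apply/PN; rewrite -pmulrn.
Qed.

Definition W (t s : R) := mu (Et `&` `]t, t + s]).

Lemma mW t s : measurable (Et `&` `]t, t + s]).
Proof. by apply: measurableI; [exact: mEt|exact: measurable_itv]. Qed.

Lemma W_shift d t s : Pinv d -> W (t + d) s = W t s.
Proof.
move=> hd; rewrite /W.
have -> : Et `&` `](t + d), (t + d + s)] = shf (- d) @^-1` (Et `&` `]t, t + s]).
  apply/seteqP; split => x /=; rewrite /shf !in_itv /=.
    move=> [h1 /andP[h2 h3]]; split.
      by rewrite (hd (x + - d)) addrNK.
    by apply/andP; split; lra.
  move=> [h1 /andP[h2 h3]]; split.
    by rewrite (hd (x + - d)) addrNK in h1.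
  by apply/andP; split; lra.
exact: lebesgue_shift (mW t s).
Qed.

Lemma W_le t s : 0 <= s -> (W t s <= s%:E)%E.
Proof.
move=> s0; rewrite /W -(mu_oc t s0).
by apply: mu_le; [exact: mW|exact: measurable_itv|exact: subIsetr].
Qed.

Lemma W_lip1 t s h : 0 <= h -> (W (t + h) s <= W t s + h%:E)%E.
Proof.
move=> h0; rewrite /W; apply: le_trans.
  apply: (@mu_le _ _ ((Et `&` `]t, t + s]) `|` `](t + s), (t + s + h)])).
  - exact: mW.
  - by apply: measurableU; [exact: mW|exact: measurable_itv].
  move=> x /= [h1]; rewrite !in_itv /= => /andP[h2 h3].
  have [h4|h4] := leP x (t + s); [left|right]; rewrite /= ?in_itv /=; [split => //; rewrite andbT; lra|lra].
apply: le_trans; first by apply: mu_U2; [exact: mW|exact: measurable_itv].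
by rewrite mu_oc.
Qed.

Lemma W_lip2 t s h : 0 <= h -> (W t s <= W (t + h) s + h%:E)%E.
Proof.
move=> h0; rewrite /W; apply: le_trans.
  apply: (@mu_le _ _ ((Et `&` `](t + h), (t + h + s)]) `|` `]t, (t + h)])).
  - exact: mW.
  - by apply: measurableU; [exact: mW|exact: measurable_itv].
  move=> x /= [h1]; rewrite !in_itv /= => /andP[h2 h3].
  have [h4|h4] := leP x (t + h); [right|left]; rewrite /= ?in_itv /=; [rewrite andbT; lra|split => //; lra].
apply: le_trans; first by apply: mu_U2; [exact: mW|exact: measurable_itv].
by rewrite mu_oc.
Qed.

Lemma W_const t t' s : W t' s = W t s.
Proof.
suff H : forall t t', (W t' s <= W t s)%E by apply/eqP; rewrite eq_le !H.
move=> {}t {}t'; apply/lee_addgt0Pr => e e0.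
have [m [k /andP[d0 de]]] := dirichlet ha e0.
set d := m%:~R * a + k%:~R in d0 de.
have Pd : Pinv d by apply: PD; [exact: Pz Pa|rewrite -[k%:~R]mulr1; apply: Pz; exact: P1].
set n := Num.floor ((t' - t) / d).
have := floor_itv ((t' - t) / d); rewrite -/n => /andP[hn1 hn2].
set t'' := t + n%:~R * d.
have e1 : W t'' s = W t s by rewrite /t'' W_shift //; exact: Pz.
have h0 : 0 <= t' - t''.
  rewrite /t''; rewrite -(ler_pM2r d0) in hn1; rewrite mulfVK ?gt_eqF // in hn1; lra.
have h1 : t' - t'' <= e.
  rewrite /t''; rewrite -(ltr_pM2r d0) in hn2; rewrite mulfVK ?gt_eqF // intrD mulrDl mul1r in hn2; lra.
have -> : t' = t'' + (t' - t'') by rewrite addrC subrK.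
apply: le_trans; first exact: W_lip1.
by rewrite e1 leeD // lee_fin.
Qed.


Let f s := fine (W 0 s).

Lemma W_fin s : 0 <= s -> W 0 s = (f s)%:E.
Proof.
move=> s0; rewrite /f fineK // ge0_fin_numE ?measure_ge0 //.
by apply: le_lt_trans (W_le 0 s0) _; rewrite ltry.
Qed.

Lemma W_add x y : 0 <= x -> 0 <= y -> W 0 (x + y) = (W 0 x + W 0 y)%E.
Proof.
move=> x0 y0; rewrite -(W_const 0 x y) /W.
rewrite -mu_U; [|exact: mW|exact: mW|].
  congr (mu _); apply/seteqP; split => z /=; rewrite !in_itv /= !add0r.
    move=> [h1 /andP[h2 h3]]; have [h4|h4] := leP z x; [left|right]; split => //; apply/andP; split; lra.
  by move=> [[h1 /andP[h2 h3]]|[h1 /andP[h2 h3]]]; split => //; apply/andP; split; lra.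
apply/seteqP; split => z //=; rewrite !in_itv /= !add0r.
by move=> [[_ /andP[h2 h3]] [_ /andP[h4 h5]]]; lra.
Qed.

Lemma f_lin s : 0 <= s -> f s = f 1 * s.
Proof.
apply: additive_linear.
  move=> x y x0 y0; rewrite /f W_add // (W_fin x0) (W_fin y0) //.
by move=> x x0; rewrite /f fine_ge0 // measure_ge0.
Qed.

Let c := f 1.
Let c0 : 0 <= c.
Proof. by rewrite /c /f fine_ge0 // measure_ge0. Qed.

Let D := Et `&` `]0, (0 + 1)].
Let mD : measurable D := mW 0 1.
Let mI : measurable (`]0, (0 + 1)] : set R) := measurable_itv _.

Let m1 := mrestr mu mD.
Let m2 := mscale (NngNum c0) (mrestr mu mI).

Lemma m1m2 : forall A : set (measurableTypeR R), measurable A -> m1 A = m2 A.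
Proof.
move=> A mA.
apply: (@measure_unique _ R (measurableTypeR R) (@ocitv R) (fun k : nat => `](- k%:R), k%:R]%classic) erefl (@ocitvI R) _ (bigcup_itvT _ _) m1 m2 _ _ A mA).
- by move=> k; exact: is_ocitv.
- move=> _ [[x1 x2] _ <-].
  set p := Num.max x1 0. set q := Num.min x2 1. set s := Num.max (q - p) 0.
  have s0 : 0 <= s by rewrite /s le_max lexx orbT.
  have E1 : `]x1, x2]%classic `&` `]0, (0 + 1)] = `]p, (p + s)]%classic :> set R.
    apply/seteqP; split => z /=; rewrite !in_itv /= add0r /s /p /q.
      move=> [/andP[h1 h2] /andP[h3 h4]]; apply/andP; split.
        by rewrite gt_max h1 h3.
      have hq : z <= Num.min x2 1 by rewrite le_min h2 h4.
      rewrite -lerBlDl le_max; apply/orP; left; lra.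
    move=> /andP[]; rewrite gt_max => /andP[h1 h3].
    have hp : Num.max x1 0 < z by rewrite gt_max h1 h3.
    rewrite -lerBlDl le_max => /orP[h|h]; last lra.
    have : z <= Num.min x2 1 by lra.
    by rewrite le_min => /andP[h2 h4]; rewrite h1 h2 h3 h4.
  change (mu (`]x1, x2] `&` D) = ((NngNum c0)%:num%:E * mu (`]x1, x2] `&` `]0%R, (0%R + 1%R)%R]))%E).
  have -> : `]x1, x2] `&` D = Et `&` `]p, (p + s)] by rewrite /D setICA E1.
  rewrite E1 mu_oc //.
  change (W p s = (c%:E * s%:E)%E).
  by rewrite (W_const 0 p s) W_fin // f_lin // -EFinM.
- move=> k; change (mu (`](- k%:R)%R, k%:R%R] `&` D) < +oo)%E.
  apply: (@le_lt_trans _ _ (mu D)).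
    apply: mu_le; [apply: measurableI => //; exact: measurable_itv|exact: mD|exact: subIsetr].
  by apply: le_lt_trans (W_le 0 ler01) _; rewrite ltry.
Qed.

Lemma c_idem : c = c * c.
Proof.
have h : mu (Et `&` D) = (c%:E * mu (Et `&` `]0%R, (0%R + 1%R)%R]))%E := m1m2 mEt.
move: h; rewrite /D setIA setIid.
change (W 0 1 = (c%:E * W 0 1)%E -> c = c * c).
by rewrite W_fin // => -[].
Qed.

Lemma muE_c : mu E = c%:E.
Proof.
rewrite -W_fin //; apply/eqP; rewrite eq_le; apply/andP; split.
- apply: (@le_trans _ _ (mu (D `|` [set 0]))).
    apply: mu_le => //; first by apply: measurableU => //; exact: measurable_set1.
    move=> x Ex; have := ET Ex; rewrite /T1 /= in_itv /= => /andP[h1 h2].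
    have [->|x0] := eqVneq x 0; first by right.
    left; split; first by rewrite /Et /= frac_id ?h1.
    by rewrite /= in_itv /= add0r ltW // andbT lt_neqAle eq_sym x0.
  apply: le_trans; first by apply: mu_U2 => //; exact: measurable_set1.
  by rewrite lebesgue_measure_set1 adde0.
- apply: (@le_trans _ _ (mu (E `|` [set 1]))).
    apply: mu_le => //; first by apply: measurableU => //; exact: measurable_set1.
    move=> x [Etx]; rewrite /= in_itv /= add0r => /andP[h1 h2].
    have [->|x1] := eqVneq x 1; first by right.
    left; move: Etx; rewrite /Et /= frac_id //.
    by rewrite ltW //= lt_neqAle x1 h2.
  apply: le_trans; first by apply: mu_U2 => //; exact: measurable_set1.
  by rewrite lebesgue_measure_set1 adde0.
Qed.

Lemma oneD_ergodic : mu E = 0%E \/ mu E = 1%E.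
Proof.
rewrite muE_c; have := c_idem.
have [->|c00] := eqVneq c 0; first by left.
move=> h; right; congr (_%:E).
by apply: (mulIf c00); rewrite mul1r -h.
Qed.

End OneD.
Section TwoD.
Variable R : realType.
Local Notation mu := (@lebesgue_measure R).

Lemma mT1 : measurable (@T1 R).
Proof. exact: measurable_itv. Qed.

Lemma mnull (s : R -> R) : measurable_fun (@T1 R) s ->
  measurable (@T1 R `&` [set x | is_rational (s x)]).
Proof.
move=> ms.
have -> : [set x | is_rational (s x)] = s @^-1` range (@ratr R).
  apply/seteqP; split => x /=; first by move=> [q ->]; exists q.
  by move=> [q _ <-]; exists q.
apply: ms; first exact: mT1.
apply: countable_measurable; first exact: measurable_set1.
exact: sub_countable (card_image_le _ _) (countableP _).
Qed.

Variables s1 s2 : R -> R.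
Variable A : set (R * R).
Hypothesis mA : measurable A.
Hypothesis AT : A `<=` @T2 R.
Hypothesis Ainv : forall g, in_Gamma s1 s2 g -> @T2 R `&` g @^-1` A = A.

Lemma invV x y : @T1 R x -> @T1 R y -> (A (x, y) <-> A (x, frac (y + s1 x))).
Proof.
move=> hx hy; have := Ainv (Gamma_v (Gamma_id s1 s2)) => /seteqP[H1 H2].
split => [h|h].
  by have [_ h'] := H2 _ h.
by apply: H1; split => //.
Qed.

Lemma invH x y : @T1 R x -> @T1 R y -> (A (x, y) <-> A (frac (x + s2 y), y)).
Proof.
move=> hx hy; have := Ainv (Gamma_h (Gamma_id s1 s2)) => /seteqP[H1 H2].
split => [h|h].
  by have [_ h'] := H2 _ h.
by apply: H1; split => //.
Qed.

Lemma Fx01 x : @T1 R x -> ~ is_rational (s1 x) ->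
  mu (xsection A x) = 0%E \/ mu (xsection A x) = 1%E.
Proof.
move=> hx hr; apply: (oneD_ergodic _ _ hr).
- exact: measurable_xsection.
- by move=> y; rewrite /xsection /= inE => /AT [].
- by move=> y hy; rewrite /xsection /= !inE; apply: invV.
Qed.

Lemma Gy01 y : @T1 R y -> ~ is_rational (s2 y) ->
  mu (ysection A y) = 0%E \/ mu (ysection A y) = 1%E.
Proof.
move=> hy hr; apply: (oneD_ergodic _ _ hr).
- exact: measurable_ysection.
- by move=> x; rewrite /ysection /= inE => /AT [].
- by move=> x hx; rewrite /ysection /= !inE; apply: invH.
Qed.


Hypotheses (ms1 : measurable_fun (@T1 R) s1) (ms2 : measurable_fun (@T1 R) s2).
Hypothesis n1 : mu (@T1 R `&` [set x | is_rational (s1 x)]) = 0%E.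
Hypothesis n2 : mu (@T1 R `&` [set x | is_rational (s2 x)]) = 0%E.

Lemma ae_null (N : set R) (P : R -> Prop) : measurable N -> mu N = 0%E ->
  (forall x, ~ N x -> P x) -> {ae mu, forall x, P x}.
Proof.
move=> mN N0 h; exists N; split => // x /= nPx.
by apply: contrapT => nNx; exact: nPx (h x nNx).
Qed.

Let G y := mu (ysection A y).
Let S := @T1 R `&` (G @^-1` [set 1%E]).

Lemma mS : measurable S.
Proof.
apply: measurableI; first exact: mT1.
rewrite -[X in measurable X]setTI.
exact: (measurable_fun_ysection mu mA) measurableT _ (measurable_realfun.emeasurable_set1 _).
Qed.

Lemma xsec_out x : ~ @T1 R x -> xsection A x = set0.
Proof.
by move=> hx; apply/seteqP; split => y /= //; rewrite /xsection /= inE => /AT [].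
Qed.

Lemma ysec_out y : ~ @T1 R y -> ysection A y = set0.
Proof.
by move=> hy; apply/seteqP; split => x /= //; rewrite /ysection /= inE => /AT [].
Qed.

Lemma muT1 : mu (@T1 R) = 1%E.
Proof. by rewrite /T1 lebesgue_measure_itv /= lte_fin ltr01 sube0. Qed.

Lemma E2gen (B : set (R * R)) : measurable B ->
  lambda2 B = (\int[mu]_y mu (ysection B y))%E.
Proof.
move=> mB; rewrite /lambda2.
rewrite (@product_measure_unique _ _ _ _ _ mu mu (product_measure2 mu mu)) //.
by move=> X Y mX mY; exact: product_measure2E.
Qed.

Lemma full1 (X Y : set R) : measurable X -> measurable Y -> X `<=` @T1 R -> Y `<=` @T1 R ->
  mu X = 1%E -> mu (X `&` Y) = mu Y.
Proof.
move=> mX mY XT YT X1.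
have h : mu Y = (mu (Y `\` X) + mu (Y `&` X))%E := measureDI mu mY mX.
rewrite h setIC.
suff -> : mu (Y `\` X) = 0%E by rewrite add0e.
apply/eqP; rewrite eq_le measure_ge0 andbT.
have : (mu (@T1 R `\` X) <= 0)%E.
  have h2 : mu (@T1 R `\` X) = (mu (@T1 R) - mu (@T1 R `&` X))%E.
    have fin : (mu (@T1 R) < +oo)%E by rewrite muT1 ltry.
    exact: (@measureD _ _ _ mu _ _ mT1 mX fin).
  by rewrite h2 (setIidr XT) muT1 X1 subee.
apply: le_trans; apply: mu_le => //.
- exact: measurableD.
- apply: measurableD => //; exact: mT1.
- by move=> z [hz1 hz2]; split => //; exact: YT.
Qed.

Lemma mEind : measurable_fun (setT : set R) (fun y : R => (\1_S y : R)%:E).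
Proof.
apply/measurable_realfun.measurable_EFinP.
exact: measurable_realfun.measurable_indic mS.
Qed.

Lemma E4 : lambda2 (A `&` (setT `*` S)) = mu S.
Proof.
rewrite E2gen; last by apply: measurableI => //; apply: measurableX => //; exact: mS.
transitivity (\int[mu]_y (\1_S y)%:E)%E; last by rewrite integral_indic ?setIT //; exact: mS.
apply: eq_integral => y _; rewrite indicE.
have [Sy|nSy] := boolP (y \in S).
  have -> : ysection (A `&` setT `*` S) y = ysection A y.
    apply/seteqP; split => x; rewrite /ysection /= !inE; first by case.
    by move=> h; split => //; split => //; exact: set_mem.
  by move: Sy; rewrite inE => -[_ /= h]; exact: h.
have -> : ysection (A `&` setT `*` S) y = set0.
  apply/seteqP; split => x; rewrite /ysection /= !inE //.
  by move=> [_ [_ /= h]]; move: nSy; rewrite (mem_set h).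
by rewrite measure0.
Qed.

Lemma E5 : lambda2 A = mu S.
Proof.
rewrite E2gen //.
transitivity (\int[mu]_y (\1_S y : R)%:E)%E; last by rewrite integral_indic ?setIT //; exact: mS.
apply: ae_eq_integral => //.
- exact (measurable_fun_ysection mu mA).
- by apply/measurable_EFinP; exact: measurable_indic mS.
- apply: (ae_null (mnull ms2) n2) => y hy _.
  rewrite indicE.
  case: (pselect (@T1 R y)) => hT.
    have hr : ~ is_rational (s2 y) by move=> h; apply: hy; split.
    case: (Gy01 hT hr) => h.
      have nS : y \notin S.
        apply/negP; rewrite inE => -[_ /=]; rewrite /G h => /eqP.
        by rewrite eqe eq_sym oner_eq0.
      by rewrite (negbTE nS) h.
    have yS : y \in S by rewrite inE; split.
    by rewrite yS h.
  have nS : y \notin S by apply/negP; rewrite inE => -[].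
  by rewrite (negbTE nS) ysec_out // measure0.
Qed.

Lemma E3 : lambda2 (A `&` (setT `*` S)) = (mu S * lambda2 A)%E.
Proof.
change (\int[mu]_x mu (xsection (A `&` setT `*` S) x) = (mu S * \int[mu]_x mu (xsection A x)))%E.
rewrite -ge0_integralZl //; last exact (measurable_fun_xsection mu mA).
apply: ae_eq_integral => //.
- have mB : measurable (A `&` setT `*` S) by apply: measurableI => //; apply: measurableX => //; exact: mS.
  exact (measurable_fun_xsection mu mB).
- apply: measurable_funeM; exact (measurable_fun_xsection mu mA).
- apply: (ae_null (mnull ms1) n1) => x hx _.
  have -> : xsection (A `&` setT `*` S) x = xsection A x `&` S.
    apply/seteqP; split => y; rewrite /xsection /= !inE.
      by move=> [h [_ h']]; split => //; exact: set_mem.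
    by move=> [h h']; split => //; split => //; exact: mem_set.
  case: (pselect (@T1 R x)) => hT.
    have hr : ~ is_rational (s1 x) by move=> h; apply: hx; split.
    have mxs : measurable (xsection A x) by exact: measurable_xsection.
    have xsT : xsection A x `<=` @T1 R by move=> y; rewrite /xsection /= inE => /AT [].
    case: (Fx01 hT hr) => h.
      rewrite h mule0; apply/eqP; rewrite eq_le measure_ge0 andbT -h.
      apply: mu_le; [apply: measurableI => //; exact: mS|exact: mxs|exact: subIsetl].
    rewrite h mule1; apply: full1 => //; first exact: mS.
    by move=> y [].
  by rewrite xsec_out // set0I measure0 mule0.
Qed.

Lemma final2D : lambda2 A = 0%E \/ lambda2 A = 1%E.
Proof.
have e3 := E3; have e4 := E4; have e5 := E5.
rewrite e4 -e5 in e3.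
have c0 : (0 <= lambda2 A)%E by rewrite e5; exact: measure_ge0.
have c1 : (lambda2 A <= 1)%E.
  rewrite e5 -muT1; apply: mu_le => //; [exact: mS|exact: mT1|by move=> y []].
have fin : lambda2 A \is a fin_num.
  by rewrite ge0_fin_numE // (le_lt_trans c1) // ltry.
move: e3 c0; rewrite -(fineK fin); set r := fine (lambda2 A) => e3 c0.
rewrite -EFinM in e3; move: e3 => [] e3.
have [->|r0] := eqVneq r 0; first by left.
right; congr (_%:E); apply: (mulIf r0); by rewrite mul1r -e3.
Qed.

End TwoD.

Unset Implicit Arguments.
Theorem corollary7 (R : realType) (s1 s2 : R -> R) :
  measurable_fun (@T1 R) s1 -> measurable_fun (@T1 R) s2 ->
  (@lebesgue_measure R) (@T1 R `&` [set x | is_rational (s1 x)]) = 0%E ->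
  (@lebesgue_measure R) (@T1 R `&` [set x | is_rational (s2 x)]) = 0%E ->
  Gamma_ergodic s1 s2.
Proof.
move=> ms1 ms2 n1 n2 A mA AT Ainv.
exact: (final2D mA AT Ainv ms1 ms2 n1 n2).
Qed.
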